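(* Let $K$ be a division ring. Then $K[G]$ is directly finite for every group $G$ if and only if for every $\mathrm{ULIE}_K$ group $\Gamma$, the group ring $K[\Gamma]$ is directly finite.
   Context: $K$ is a nonzero division ring; $K[G]$ is the group ring. A ring is directly finite if $xy=1$ implies $yx=1$. For integers $m,n\ge2$ let $S_{m,n}=\{0,\dots,m-1\}\times\{0,\dots,n-1\}$; for a partition $\pi$ of $S_{m,n}$ write $(i,j)\sim_\pi(i',j')$ if the two pairs lie in the same block. $\Gamma_\pi$ is the group with generators $a_0,\dots,a_{m-1},b_0,\dots,b_{n-1}$ and relations $a_0=b_0=1$ and $a_ib_j=a_{i'}b_{j'}$ whenever $(i,j)\sim_\pi(i',j')$. $\pi$ is nondegenerate if in $\Gamma_\pi$ the $a_i$ are pairwise distinct and the $b_j$ are pairwise distinct. Given nonzero $r_0,\dots,r_{m-1},s_0,\dots,s_{n-1}\in K$, $\pi$ is realizable with them if for every block $E$, $\sum_{(i,j)\in E}r_is_j$ equals $1$ if $(0,0)\in E$ and $0$ otherwise. With partitions ordered by refinement, $\pi$ is minimally realizable over $K$ if for some choice of nonzero $r_i,s_j\in K$ it is minimal among the partitions of $S_{m,n}$ realizable with those elements. An $\mathrm{ULIE}_K$ group is a group $\Gamma_\pi$ for some $m,n\ge2$ and some nondegenerate partition $\pi$ of $S_{m,n}$ minimally realizable over $K$. *)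

(* Defs.v *)
From HB Require Import structures.
From mathcomp Require Import all_boot all_order all_algebra.
From mathcomp Require Import monoid.

Set Implicit Arguments.
Unset Strict Implicit.
Unset Printing Implicit Defensive.

Import GRing.Theory.

(** K is a (nonzero) division ring: a unit ring (1 != 0 is built into
    unitRingType) in which every nonzero element is invertible. *)
Definition is_divring (K : unitRingType) : Prop :=
  forall x : K, x != 0%R -> x \is a GRing.unit.

(** ** The group ring K[G]
    An element of K[G] is a finitely supported function G -> K; [s] is a
    finite list containing its support. *)
Section GroupRing.
Variables (K : unitRingType) (G : groupType).

Definition supported_in (f : G -> K) (s : seq G) : Prop :=
  forall x, f x != 0%R -> x \in s.

(** Product in K[G]: (f * g)(h) = sum_{a in G} f(a) g(a^-1 h); since f
    vanishes outside s, it suffices to sum over the support list s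
    (without repetitions). *)
Definition gr_mul (s : seq G) (f g : G -> K) : G -> K :=
  fun h => (\sum_(a <- undup s) f a * g ((a^-1) * h)%g)%R.

Definition gr_one : G -> K := fun h => if h == 1%g then 1%R else 0%R.

Definition group_ring_directly_finite : Prop :=
  forall (f g : G -> K) (s t : seq G),
    supported_in f s -> supported_in g t ->
    gr_mul s f g =1 gr_one -> gr_mul t g f =1 gr_one.
End GroupRing.

Section Partitions.
Variables (m n : nat).
Notation S := ('I_m * 'I_n)%type.

Definition is_partition (P : {set {set S}}) : bool := partition P [set: S].

Definition same_block (P : {set {set S}}) (x y : S) : bool :=
  pblock P x == pblock P y.

Definition refines (Q P : {set {set S}}) : Prop :=
  forall E, E \in Q -> exists2 F, F \in P & E \subset F.

Definition is00 (x : S) : bool := (nat_of_ord x.1 == 0) && (nat_of_ord x.2 == 0).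

Section Realize.
Variable K : unitRingType.

Definition realizable_with (r : 'I_m -> K) (s : 'I_n -> K)
    (P : {set {set S}}) : Prop :=
  is_partition P /\
  forall E, E \in P ->
    (\sum_(x in E) r x.1 * s x.2)%R =
      (if [exists x in E, is00 x] then 1%R else 0%R).

Definition minimally_realizable (P : {set {set S}}) : Prop :=
  exists (r : 'I_m -> K) (s : 'I_n -> K),
    (forall i, r i != 0%R) /\ (forall j, s j != 0%R) /\
    realizable_with r s P /\
    (forall Q, realizable_with r s Q -> refines Q P -> Q = P).
End Realize.

Definition relations_hold (P : {set {set S}}) (H : groupType)
    (a : 'I_m -> H) (b : 'I_n -> H) : Prop :=
  (forall i : 'I_m, nat_of_ord i = 0 -> a i = 1%g) /\
  (forall j : 'I_n, nat_of_ord j = 0 -> b j = 1%g) /\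
  (forall x y : S, same_block P x y -> (a x.1 * b x.2 = a y.1 * b y.2)%g).

Definition is_group_hom (H1 H2 : groupType) (phi : H1 -> H2) : Prop :=
  forall x y, phi (x * y)%g = (phi x * phi y)%g.

(** (Gamma, a, b) is (isomorphic to) the group Gamma_P with the
    presentation <a_i, b_j | relations>, i.e. it satisfies the universal
    property of that presentation. *)
Definition presents (P : {set {set S}}) (Gamma : groupType)
    (a : 'I_m -> Gamma) (b : 'I_n -> Gamma) : Prop :=
  relations_hold P a b /\
  forall (H : groupType) (a' : 'I_m -> H) (b' : 'I_n -> H),
    relations_hold P a' b' ->
    (exists phi : Gamma -> H, is_group_hom phi /\
        (forall i, phi (a i) = a' i) /\ (forall j, phi (b j) = b' j)) /\
    (forall phi psi : Gamma -> H, is_group_hom phi -> is_group_hom psi ->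
        (forall i, phi (a i) = psi (a i)) -> (forall j, phi (b j) = psi (b j)) ->
        phi =1 psi).
End Partitions.

Definition ULIE_group (K : unitRingType) (Gamma : groupType) : Prop :=
  exists (m n : nat) (P : {set {set ('I_m * 'I_n)}})
         (a : 'I_m -> Gamma) (b : 'I_n -> Gamma),
    (2 <= m)%N /\ (2 <= n)%N /\ is_partition P /\ presents P a b /\
    injective a /\ injective b /\
    minimally_realizable K P.

(* Main.v *)
Require Import Defs.
From HB Require Import structures.
From mathcomp Require Import all_boot all_order all_algebra.
From mathcomp Require Import monoid.
From mathcomp.classical Require Import boolp.

Set Implicit Arguments.
Unset Strict Implicit.
Unset Printing Implicit Defensive.



Section Pres.
Local Open Scope group_scope.
Variables (m n : nat) (P : {set {set ('I_m * 'I_n)}}).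

Definition gen := ('I_m + 'I_n)%type.
Definition word := seq (bool * gen).

Definition weval (H : groupType) (v : gen -> H) (w : word) : H :=
  foldr (fun u acc => (if u.1 then (v u.2)^-1 else v u.2) * acc) 1 w.

Definition winv (w : word) : word := rev (map (fun u => (~~ u.1, u.2)) w).

Definition valid (H : groupType) (v : gen -> H) :=
  relations_hold P (fun i => v (inl i)) (fun j => v (inr j)).

Definition weq (w1 w2 : word) : Prop :=
  forall (H : groupType) (v : gen -> H), valid v -> weval v w1 = weval v w2.

Lemma weval_cat (H : groupType) (v : gen -> H) w1 w2 :
  weval v (w1 ++ w2) = weval v w1 * weval v w2.
Proof. by elim: w1 => [|u w IH] /=; rewrite ?mul1g // IH mulgA. Qed.

Lemma weval_inv (H : groupType) (v : gen -> H) w :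
  weval v (winv w) = (weval v w)^-1.
Proof.
elim: w => [|[b x] w IH] /=; first by rewrite invg1.
rewrite /winv /= rev_cons -cats1 weval_cat -/(winv w) IH /= mulg1 invgM.
by case: b => //=; rewrite invgK.
Qed.

Lemma weval1 (H : groupType) (v : gen -> H) x : weval v [:: (false, x)] = v x.
Proof. exact: mulg1. Qed.

Lemma canon_ex w : exists w', `[< weq w w' >].
Proof. by exists w; apply/asboolP => H v _. Qed.

Definition canon w := xchoose (canon_ex w).

Lemma canonP w : weq w (canon w).
Proof. exact/asboolP/(xchooseP (canon_ex w)). Qed.

Lemma canon_eq w1 w2 : weq w1 w2 -> canon w1 = canon w2.
Proof.
move=> e; apply: eq_xchoose => w; apply/asboolP/asboolP => h H v hv.
  by rewrite -(h H v hv) (e H v hv).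
by rewrite (e H v hv) (h H v hv).
Qed.

Lemma canonK w : canon (canon w) = canon w.
Proof. by apply: canon_eq => H v hv; rewrite -canonP. Qed.

Definition Pres := {w : word | canon w == w}.

HB.instance Definition _ := Choice.on Pres.

Definition cls (w : word) : Pres := exist _ (canon w) (introT eqP (canonK w)).

Lemma clsE w1 w2 : weq w1 w2 -> cls w1 = cls w2.
Proof. by move=> e; apply: val_inj; rewrite /= (canon_eq e). Qed.

Lemma weval_cls (H : groupType) (v : gen -> H) w :
  valid v -> weval v (val (cls w)) = weval v w.
Proof. by move=> hv; rewrite /= -canonP. Qed.

Lemma cls_val (x : Pres) : cls (val x) = x.
Proof. by apply: val_inj => /=; case: x => w /= /eqP. Qed.

Definition pmul (x y : Pres) := cls (val x ++ val y).
Definition pone := cls [::].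
Definition pinv (x : Pres) := cls (winv (val x)).

Lemma pmulA : associative pmul.
Proof.
move=> x y z; apply: clsE => H v hv.
by rewrite !weval_cat !weval_cls // !weval_cat mulgA.
Qed.
Lemma pmul1 : left_id pone pmul.
Proof.
move=> x; rewrite /pmul -[RHS]cls_val; apply: clsE => H v hv.
by rewrite weval_cat weval_cls //= mul1g.
Qed.
Lemma pmulg1 : right_id pone pmul.
Proof.
move=> x; rewrite /pmul -[RHS]cls_val; apply: clsE => H v hv.
by rewrite weval_cat weval_cls //= mulg1.
Qed.
Lemma pmulV : left_inverse pone pinv pmul.
Proof.
move=> x; apply: clsE => H v hv.
by rewrite weval_cat weval_cls // weval_inv mulVg.
Qed.
Lemma pmulgV : right_inverse pone pinv pmul.
Proof.
move=> x; apply: clsE => H v hv.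
by rewrite weval_cat weval_cls // weval_inv mulgV.
Qed.

HB.instance Definition _ := isGroup.Build Pres pmulA pmul1 pmulg1 pmulV pmulgV.

End Pres.



Section Pres2.
Local Open Scope group_scope.
Variables (m n : nat) (P : {set {set ('I_m * 'I_n)}}).
Notation G := (Pres P).

Definition ga (i : 'I_m) : G := cls P [:: (false, inl i)].
Definition gb (j : 'I_n) : G := cls P [:: (false, inr j)].

Lemma hom1 (H1 H2 : groupType) (f : H1 -> H2) : is_group_hom f -> f 1 = 1.
Proof.
move=> hf; apply: (@mulgI _ (f 1)); rewrite -hf mulg1; by rewrite mulg1.
Qed.

Lemma homV (H1 H2 : groupType) (f : H1 -> H2) x : is_group_hom f -> f x^-1 = (f x)^-1.
Proof.
move=> hf; apply: (@mulIg _ (f x)); by rewrite -hf !mulVg (hom1 hf).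
Qed.

Lemma Gmul (x y : G) : x * y = cls P (val x ++ val y).
Proof. by []. Qed.
Lemma Gone : (1 : G) = cls P [::].
Proof. by []. Qed.
Lemma Ginv (x : G) : x^-1 = cls P (winv (val x)).
Proof. by []. Qed.

Lemma cls_cons u w : cls P (u :: w) =
  (if u.1 then (cls P [:: (false, u.2)])^-1 else cls P [:: (false, u.2)]) * cls P w.
Proof.
case: u => b x; case: b => /=; rewrite ?Ginv Gmul; apply: clsE => H v hv.
  by rewrite weval_cat !weval_cls // ?weval_inv ?weval_cls //= !mulg1.
by rewrite weval_cat !weval_cls //= !mulg1.
Qed.

Lemma pres_presents : presents P ga gb.
Proof.
split.
  split; [move=> i i0| split; [move=> j j0| move=> x y hxy]].
  - rewrite Gone; apply: clsE => H v [h1 _]; by rewrite weval1 h1.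
  - rewrite Gone; apply: clsE => H v [_ [h2 _]]; by rewrite weval1 h2.
  - rewrite !Gmul; apply: clsE => H v hv; case: (hv) => _ [_ h3].
    by rewrite !weval_cat /ga /gb !weval_cls // !weval1 (h3 x y hxy).
move=> H a' b' hr; split.
  pose v (x : gen m n) := match x with inl i => a' i | inr j => b' j end.
  have hv : valid P v by [].
  exists (fun x : G => weval v (val x)); split; [|split].
  - by move=> x y; rewrite Gmul weval_cls // weval_cat.
  - by move=> i; rewrite weval_cls // weval1.
  - by move=> j; rewrite weval_cls // weval1.
move=> phi psi hphi hpsi ha hb x; rewrite -(cls_val x).
elim: (val x) => [|u w IH]; first by rewrite -Gone (hom1 hphi) (hom1 hpsi).
rewrite cls_cons hphi hpsi IH; case: u => b [i|j] /=.
- by case: b; rewrite ?homV // -/(ga i) ha.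
- by case: b; rewrite ?homV // -/(gb j) hb.
Qed.

End Pres2.

Import GRing.Theory.

Section Sums.
Variable K : unitRingType.
Local Open Scope ring_scope.

Lemma sum_pick (T : eqType) (L : seq T) (x : T) (F : T -> K) :
  uniq L -> x \in L -> \sum_(w <- L) (if w == x then F w else 0) = F x.
Proof.
move=> uL xL; rewrite (bigD1_seq x) //= eqxx big1 ?addr0 //.
by move=> w /negbTE ->.
Qed.

Lemma sum_pick0 (T : eqType) (L : seq T) (x : T) (F : T -> K) :
  x \notin L -> \sum_(w <- L) (if w == x then F w else 0) = 0.
Proof.
move=> xL; rewrite big1_seq // => w /andP[_ wL].
by case: eqP => // e; rewrite -e wL in xL.
Qed.

Lemma divring_mul_neq0 (hK : is_divring K) (x y : K) :
  x != 0 -> y != 0 -> x * y != 0.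
Proof.
move=> x0 y0; apply: contra y0 => /eqP e.
by rewrite -(mulKr (hK x x0) y) e mulr0.
Qed.

Lemma divring_comm1 (hK : is_divring K) (x y : K) :
  x * y = 1 -> y * x = 1.
Proof.
move=> e; have x0 : x != 0.
  by apply/eqP => x0; move: e; rewrite x0 mul0r => /eqP; rewrite eq_sym oner_eq0.
have ey : y = x^-1 by rewrite -(mulKr (hK x x0) y) e mulr1.
by rewrite ey mulVr // hK.
Qed.

End Sums.


Section GR.
Variables (K : unitRingType) (G : groupType).
Local Open Scope ring_scope.

Definition ind k (r : 'I_k -> K) (g : 'I_k -> G) (x : G) : K :=
  \sum_(i < k) if g i == x then r i else 0.

Definition conv k l (r : 'I_k -> K) (g : 'I_k -> G) (s : 'I_l -> K) (h : 'I_l -> G)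
  (z : G) : K :=
  \sum_(p : 'I_k * 'I_l) if (g p.1 * h p.2)%g == z then r p.1 * s p.2 else 0.

Lemma eq_mulV (x y z : G) : (x == (y^-1 * z)%g) = ((y * x)%g == z).
Proof. by rewrite -(inj_eq (@mulgI _ y)) mulVKg. Qed.

Lemma mul_ind k l (r : 'I_k -> K) g (s : 'I_l -> K) h (L : seq G) z :
  (forall i, r i != 0 -> g i \in L) ->
  gr_mul L (ind r g) (ind s h) z = conv r g s h z.
Proof.
move=> hL; rewrite /gr_mul /conv.
under eq_bigr => a _ do rewrite /ind mulr_suml.
rewrite exchange_big /= -(pair_big xpredT xpredT (fun i j =>
   if (g i * h j)%g == z then r i * s j else 0)) /=.
apply: eq_bigr => i _.
transitivity (r i * ind s h ((g i)^-1 * z)%g).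
  have e a : (if g i == a then r i else 0) * ind s h (a^-1 * z)%g =
     if a == g i then r i * ind s h (a^-1 * z)%g else 0.
    by rewrite eq_sym; case: eqP => [->|]; rewrite ?mul0r.
  under eq_bigr => a _ do rewrite e.
  have [giL|giL] := boolP (g i \in undup L).
    exact: (sum_pick (fun a => r i * ind s h (a^-1 * z)%g) (undup_uniq L) giL).
  rewrite sum_pick0 //; have -> : r i = 0.
    by apply/eqP; apply: contraNT giL => /hL; rewrite mem_undup.
  by rewrite mul0r.
rewrite /ind mulr_sumr; apply: eq_bigr => j _.
by rewrite eq_mulV; case: ifP; rewrite ?mulr0.
Qed.

Lemma supported_ind k (r : 'I_k -> K) g :
  supported_in (ind r g) (map g (enum 'I_k)).
Proof.
move=> x; apply: contraR => hx; rewrite /ind big1 // => i _.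
by case: eqP => // e; rewrite -e map_f ?mem_enum in hx.
Qed.

End GR.


Section Parts.
Variables (m n : nat).
Notation S := ('I_m * 'I_n)%type.
Implicit Types Q : {set {set S}}.

Lemma part_cover Q : is_partition Q -> cover Q = setT.
Proof. by move=> hQ; apply: cover_partition hQ. Qed.

Lemma part_triv Q : is_partition Q -> trivIset Q.
Proof. by case/and3P. Qed.

Lemma same_blockE Q x y : is_partition Q -> same_block Q x y = (y \in pblock Q x).
Proof.
by move=> hQ; rewrite /same_block eq_pblock ?part_triv ?part_cover ?inE.
Qed.

Lemma pblock_in Q x : is_partition Q -> pblock Q x \in Q.
Proof. by move=> hQ; rewrite pblock_mem ?part_cover ?inE. Qed.

Lemma in_pblock Q x : is_partition Q -> x \in pblock Q x.
Proof. by move=> hQ; rewrite mem_pblock ?part_cover ?inE. Qed.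

Lemma refine_same Q' Q x y : is_partition Q' -> is_partition Q ->
  refines Q' Q -> same_block Q' x y -> same_block Q x y.
Proof.
move=> hQ' hQ href; rewrite same_blockE // => hy.
have [F FQ sub] := href _ (pblock_in x hQ').
have xF : x \in F by apply: (subsetP sub); apply: in_pblock.
have yF : y \in F by apply: (subsetP sub).
rewrite /same_block (def_pblock (part_triv hQ) FQ xF).
by rewrite (def_pblock (part_triv hQ) FQ yF).
Qed.

Lemma refines_trans Q1 Q2 Q3 : refines Q1 Q2 -> refines Q2 Q3 -> refines Q1 Q3.
Proof.
move=> h12 h23 E EQ; have [F FQ sEF] := h12 E EQ; have [F' F'Q sFF'] := h23 F FQ.
by exists F'; last by apply: subset_trans sFF'.
Qed.

Lemma part_eq Q Q' : is_partition Q -> is_partition Q' ->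
  (forall x y, same_block Q x y = same_block Q' x y) -> Q = Q'.
Proof.
move=> hQ hQ' e.
rewrite -(equivalence_partition_pblock hQ) -(equivalence_partition_pblock hQ').
have -> : (fun x y => y \in pblock Q x) = (fun x y => y \in pblock Q' x).
  by apply: funext => x; apply: funext => y; rewrite -!same_blockE.
by [].
Qed.

End Parts.


Section Real.
Variables (K : unitRingType) (m n : nat).
Notation S := ('I_m * 'I_n)%type.
Local Open Scope ring_scope.

Lemma is00E (x00 : S) (x : S) : nat_of_ord x00.1 = 0%N -> nat_of_ord x00.2 = 0%N ->
  is00 x = (x == x00).
Proof.
move=> h1 h2; case: x x00 h1 h2 => [i j] [i0 j0] /= h1 h2.
rewrite /is00 /= xpair_eqE -!val_eqE /= h1 h2.
by [].
Qed.

Lemma conv_real (H : groupType) (a : 'I_m -> H) (b : 'I_n -> H)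
   (r : 'I_m -> K) (s : 'I_n -> K) (Q : {set {set S}}) (x00 : S) :
  nat_of_ord x00.1 = 0%N -> nat_of_ord x00.2 = 0%N ->
  realizable_with r s Q -> relations_hold Q a b ->
  forall w, conv r a s b w = gr_one K w.
Proof.
move=> h1 h2 [hQ hE] [ha [hb hab]] w.
set fa := fun p : S => (a p.1 * b p.2)%g.
have fa00 : fa x00 = 1%g by rewrite /fa ha // hb // mulg1.
have faE A x y : A \in Q -> x \in A -> y \in A -> fa x = fa y.
  move=> AQ xA yA; apply: hab; rewrite /same_block.
  by rewrite (def_pblock (part_triv hQ) AQ xA) (def_pblock (part_triv hQ) AQ yA).
rewrite /conv -big_mkcond /=.
rewrite (eq_bigl (fun p => (p \in [set: S]) && (fa p == w))); last by move=> p; rewrite inE.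
rewrite (set_partition_big_cond Q hQ) /=.
set E0 := pblock Q x00.
have hsum (A : {set S}) : A \in Q -> \sum_(x in A | fa x == w) r x.1 * s x.2 =
    if [exists x in A, fa x == w] then \sum_(x in A) r x.1 * s x.2 else 0.
  move=> AQ; case: existsP => [[y /andP[yA /eqP fy]]|no].
    apply: eq_bigl => x; case xA: (x \in A) => //=.
    by rewrite (faE A x y) // fy eqxx.
  apply: big1 => x /andP[xA fx]; case: no; exists x; by rewrite xA.
have x00E0 : x00 \in E0 by apply: in_pblock.
rewrite (bigD1 E0) ?pblock_in //= [X in _ + X]big1 ?addr0; last first.
  move=> A /andP[AQ AE0]; rewrite hsum //; case: ifP => // _.
  rewrite hE //; case: existsP => // [[x /andP[xA]]].
  rewrite (is00E _ h1 h2) => /eqP ex; subst x.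
  by rewrite -(def_pblock (part_triv hQ) AQ xA) eqxx in AE0.
rewrite hsum ?pblock_in // /gr_one; case: existsP => [[y /andP[yA /eqP fy]]|no].
  rewrite hE ?pblock_in //.
  have -> : w = 1%g by rewrite -fy -fa00 (faE E0 y x00) ?pblock_in.
  rewrite eqxx; case: existsP => // no'; case: no'; exists x00.
  by rewrite x00E0 /is00 h1 h2.
case: (w =P 1%g) => [w1|]; last by []. case: no; exists x00. by rewrite x00E0 w1 -fa00 eqxx.
Qed.
End Real.

Local Open Scope ring_scope.

Lemma push (K : unitRingType) (I : finType) (Ga G : groupType) (c : I -> Ga)
   (phi : Ga -> G) (F : I -> K) :
  (forall w, \sum_p (if c p == w then F p else 0) = gr_one K w) ->
  phi 1%g = 1%g -> (exists p, c p = 1%g) ->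
  forall z, \sum_p (if phi (c p) == z then F p else 0) = gr_one K z.
Proof.
move=> hw phi1 [p1 cp1] z.
set L := undup (map c (enum I)).
have uL : uniq L by apply: undup_uniq.
have cL p : c p \in L by rewrite mem_undup map_f ?mem_enum.
transitivity (\sum_p \sum_(w <- L)
    (if w == c p then (if phi w == z then F p else 0) else 0)).
  apply: eq_bigr => p _; symmetry.
  exact: (sum_pick (fun w => if phi w == z then F p else 0) uL (cL p)).
rewrite exchange_big /=.
transitivity (\sum_(w <- L) (if w == 1%g then (if phi w == z then (1 : K) else 0) else 0)).
  apply: eq_bigr => w _.
  transitivity (if phi w == z then \sum_p (if c p == w then F p else 0) else 0).
    case hz: (phi w == z); last by rewrite big1 // => p _; case: ifP.
    by apply: eq_bigr => p _; rewrite eq_sym.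
  by rewrite hw /gr_one; case: (w == 1%g); case: (phi w == z).
have oneL : (1%g : Ga) \in L by rewrite -cp1.
rewrite (sum_pick (fun w => if phi w == z then (1 : K) else 0) uL oneL).
by rewrite phi1 /gr_one eq_sym.
Qed.


Lemma core0 (K : unitRingType)
  (HU : forall Gamma : groupType, ULIE_group K Gamma ->
     group_ring_directly_finite K Gamma)
  (G : groupType) k l (r : 'I_k -> K) (g : 'I_k -> G) (s : 'I_l -> K)
  (h : 'I_l -> G) (i0 : 'I_k) (j0 : 'I_l) :
  (2 <= k)%N -> (2 <= l)%N -> nat_of_ord i0 = 0%N -> nat_of_ord j0 = 0%N ->
  (g i0 * h j0 = 1)%g -> injective g -> injective h ->
  (forall i, r i != 0) -> (forall j, s j != 0) ->
  (forall z, conv r g s h z = gr_one K z) ->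
  forall z, conv s h r g z = gr_one K z.
Proof.
move=> k2 l2 hi0 hj0 gh1 ig ih rn0 sn0 hconv.
pose S := ('I_k * 'I_l)%type.
pose f := fun p : S => (g p.1 * h p.2)%g.
pose PG := preim_partition f [set: S].
have eqiR : {in [set: S] & &, equivalence_rel (fun x y => f x == f y)}.
  by split => // /eqP ->.
have hPG : is_partition PG by apply: preim_partitionP.
have sameG x y : same_block PG x y -> f x = f y.
  rewrite same_blockE // => hy; apply/eqP.
  by rewrite -(pblock_equivalence_partition eqiR) ?inE.
pose x00 : S := (i0, j0).
have f00 : f x00 = 1%g by [].
have realPG : realizable_with r s PG.
  split => // E /imsetP[x _ ->].
  transitivity (conv r g s h (f x)).
    rewrite /conv -big_mkcond; apply: eq_bigl => y; rewrite !inE eq_sym.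
    by [].
  rewrite hconv /gr_one; case: existsP => [[y /andP[yE]]|no].
    rewrite (@is00E k l x00 y hi0 hj0) => /eqP ey; subst y.
    by move: yE; rewrite !inE /= => /eqP ->; rewrite f00 eqxx.
  case: eqP => // fx1; case: no; exists x00.
  by rewrite !inE fx1 f00 eqxx /is00 /= hi0 hj0.
pose C := fun Q : {set {set S}} => `[< realizable_with r s Q /\ refines Q PG >].
pose N := fun Q : {set {set S}} => #|[set p : S * S | same_block Q p.1 p.2]|.
have CPG : C PG by apply/asboolP; split => // E EP; exists E.
case: (arg_minnP N CPG) => Q /asboolP [realQ refQ] minN.
have hQ : is_partition Q := realQ.1.
have minQ : minimally_realizable K Q.
  exists r, s; split; [|split; [|split]] => //.
  move=> Q' realQ' refQ'.
  have hQ' := realQ'.1.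
  have CQ' : C Q' by apply/asboolP; split => //; apply: refines_trans refQ' refQ.
  have le := minN _ CQ'.
  have sub : [set p : S * S | same_block Q' p.1 p.2] \subset
             [set p : S * S | same_block Q p.1 p.2].
    apply/subsetP => p; rewrite !inE; exact: refine_same.
  have eqS : [set p : S * S | same_block Q' p.1 p.2] =
             [set p : S * S | same_block Q p.1 p.2].
    by apply/eqP; rewrite eqEcard sub /=; exact: le.
  apply: part_eq => // x y.
  by move/setP: eqS => /(_ (x, y)); rewrite !inE.
pose a := @ga k l Q.
pose b := @gb k l Q.
have pres : presents Q a b := @pres_presents k l Q.
case: (pres) => relG univ.
pose a' i := (h j0 * g i)%g.
pose b' j := (h j * g i0)%g.
have hg0 : (h j0 * g i0 = 1)%g by rewrite -(mulg1_eq gh1) mulVg.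
have rel' : relations_hold Q a' b'.
  split; [move=> i hi | split; [move=> j hj | move=> x y hxy]].
  - have -> : i = i0 by apply: val_inj; rewrite /= hi hi0.
    exact: hg0.
  - have -> : j = j0 by apply: val_inj; rewrite /= hj hj0.
    exact: hg0.
  - have := sameG x y (refine_same hQ hPG refQ hxy); rewrite /f /a' /b' => e.
    by rewrite !mulgA -(mulgA (h j0)) e !mulgA.
case: (univ G a' b' rel') => [[phi [hphi [pa pb]]] _].
have phi1 : phi 1%g = 1%g := hom1 hphi.
have ia : injective a.
  move=> i i' e; apply: ig; apply: (@mulgI _ (h j0)).
  by have := congr1 phi e; rewrite !pa.
have ib : injective b.
  move=> j j' e; apply: ih; apply: (@mulIg _ (g i0)).
  by have := congr1 phi e; rewrite !pb.
have ulie : ULIE_group K (Pres Q).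
  by exists k, l, Q, a, b.
have DF := HU _ ulie.
have hXY : gr_mul (map a (enum 'I_k)) (ind r a) (ind s b) =1 @gr_one K _.
  move=> w; rewrite mul_ind; last by move=> i _; rewrite map_f ?mem_enum.
  exact: (@conv_real K k l _ a b r s Q x00 hi0 hj0 realQ relG w).
have hYX := DF _ _ _ _ (@supported_ind K _ k r a) (@supported_ind K _ l s b) hXY.
have hw w : \sum_(p : 'I_l * 'I_k) (if (b p.1 * a p.2)%g == w then s p.1 * r p.2 else 0)
    = gr_one K w.
  by rewrite -(hYX w) mul_ind // => j _; rewrite map_f ?mem_enum.
have ex1 : exists p : 'I_l * 'I_k, (b p.1 * a p.2)%g = 1%g.
  exists (j0, i0); case: relG => ha [hb _] /=; by rewrite ha // hb // mulg1.
move=> z; rewrite /conv -(push (c := fun p : 'I_l * 'I_k => (b p.1 * a p.2)%g) hw phi1 ex1 z).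
apply: eq_bigr => p _; rewrite hphi pa pb /a' /b'.
by rewrite -mulgA (mulgA (g i0)) gh1 mul1g.
Qed.

From mathcomp Require Import perm zify.


Lemma conv_perm (K : unitRingType) (G : groupType) k l (r : 'I_k -> K) (g : 'I_k -> G)
  (s : 'I_l -> K) (h : 'I_l -> G) (si : {perm 'I_k}) (ta : {perm 'I_l}) z :
  conv (r \o si) (g \o si) (s \o ta) (h \o ta) z = conv r g s h z.
Proof.
rewrite /conv [RHS](reindex_inj (h := fun p : 'I_k * 'I_l => (si p.1, ta p.2))) //.
by move=> [x1 x2] [y1 y2] /= [] /perm_inj -> /perm_inj ->.
Qed.

Lemma sum_single (K : unitRingType) k (i1 : 'I_k) (F : 'I_k -> K) :
  (k <= 1)%N -> \sum_i F i = F i1.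
Proof.
move=> k1; rewrite (bigD1 i1) //= big1 ?addr0 // => i /eqP[]; apply: val_inj.
by case: i i1 => [i hi] [j hj] /=; lia.
Qed.

Lemma inv_one (G : groupType) (x y : G) : (x * y = 1 -> y * x = 1)%g.
Proof. by move=> e; rewrite -(mulg1_eq e) mulVg. Qed.

Lemma small_k (K : unitRingType) (hK : is_divring K) (G : groupType) k l
  (r : 'I_k -> K) (g : 'I_k -> G) (s : 'I_l -> K) (h : 'I_l -> G) (i1 : 'I_k) :
  (k <= 1)%N -> injective h -> (forall i, r i != 0) -> (forall j, s j != 0) ->
  (forall z, conv r g s h z = gr_one K z) ->
  forall z, conv s h r g z = gr_one K z.
Proof.
move=> k1 ih rn0 sn0 hconv.
have cE z : conv r g s h z = \sum_j (if (g i1 * h j)%g == z then r i1 * s j else 0).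
  rewrite /conv -(pair_big xpredT xpredT
     (fun i j => if (g i * h j)%g == z then r i * s j else 0)) /=.
  exact: sum_single.
have gh j : (g i1 * h j = 1)%g.
  have := hconv (g i1 * h j)%g; rewrite cE (bigD1 j) //= eqxx big1 ?addr0; last first.
    move=> j' hj'; case: eqP => // /mulgI /ih e; by rewrite e eqxx in hj'.
  rewrite /gr_one; case: eqP => // _ e.
  by move: (divring_mul_neq0 hK (rn0 i1) (sn0 j)); rewrite e eqxx.
have s1 : r i1 * \sum_j s j = 1.
  have := hconv 1%g; rewrite cE /gr_one eqxx mulr_sumr => <-.
  by apply: eq_bigr => j _; rewrite gh eqxx.
have s1' := divring_comm1 hK s1.
move=> z; rewrite /conv -(pair_big xpredT xpredT
     (fun j i => if (h j * g i)%g == z then s j * r i else 0)) /=.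
transitivity (\sum_j (if (1%g == z) then s j * r i1 else 0)).
  by apply: eq_bigr => j _; rewrite (@sum_single K k i1 _ k1) (inv_one (gh j)).
rewrite /gr_one eq_sym; case: (z == 1%g); last by rewrite big1.
by rewrite -mulr_suml.
Qed.

Lemma small_l (K : unitRingType) (hK : is_divring K) (G : groupType) k l
  (r : 'I_k -> K) (g : 'I_k -> G) (s : 'I_l -> K) (h : 'I_l -> G) (j1 : 'I_l) :
  (l <= 1)%N -> injective g -> (forall i, r i != 0) -> (forall j, s j != 0) ->
  (forall z, conv r g s h z = gr_one K z) ->
  forall z, conv s h r g z = gr_one K z.
Proof.
move=> l1 ig rn0 sn0 hconv.
have cE z : conv r g s h z = \sum_i (if (g i * h j1)%g == z then r i * s j1 else 0).
  rewrite /conv -(pair_big xpredT xpredT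
     (fun i j => if (g i * h j)%g == z then r i * s j else 0)) /=.
  by apply: eq_bigr => i _; apply: sum_single.
have gh i : (g i * h j1 = 1)%g.
  have := hconv (g i * h j1)%g; rewrite cE (bigD1 i) //= eqxx big1 ?addr0; last first.
    move=> i' hi'; case: eqP => // /mulIg /ig e; by rewrite e eqxx in hi'.
  rewrite /gr_one; case: eqP => // _ e.
  by move: (divring_mul_neq0 hK (rn0 i) (sn0 j1)); rewrite e eqxx.
have s1 : (\sum_i r i) * s j1 = 1.
  have := hconv 1%g; rewrite cE /gr_one eqxx mulr_suml => <-.
  by apply: eq_bigr => i _; rewrite gh eqxx.
have s1' := divring_comm1 hK s1.
move=> z; rewrite /conv -(pair_big xpredT xpredT
     (fun j i => if (h j * g i)%g == z then s j * r i else 0)) /=.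
rewrite (@sum_single K l j1 _ l1).
transitivity (\sum_i (if (1%g == z) then s j1 * r i else 0)).
  by apply: eq_bigr => i _; rewrite (inv_one (gh i)).
rewrite /gr_one eq_sym; case: (z == 1%g); last by rewrite big1.
by rewrite -mulr_sumr.
Qed.


Lemma core (K : unitRingType) (hK : is_divring K)
  (HU : forall Gamma : groupType, ULIE_group K Gamma ->
     group_ring_directly_finite K Gamma)
  (G : groupType) k l (r : 'I_k -> K) (g : 'I_k -> G) (s : 'I_l -> K)
  (h : 'I_l -> G) :
  injective g -> injective h ->
  (forall i, r i != 0) -> (forall j, s j != 0) ->
  (forall z, conv r g s h z = gr_one K z) ->
  forall z, conv s h r g z = gr_one K z.
Proof.
move=> ig ih rn0 sn0 hconv.
have [p hp] : exists p : 'I_k * 'I_l, (g p.1 * h p.2 = 1)%g.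
  case: (pselect (exists p : 'I_k * 'I_l, (g p.1 * h p.2 = 1)%g)) => // no.
  exfalso; have := hconv 1%g; rewrite /conv big1 => [|p _]; last first.
    by case: eqP => // e; case: no; exists p.
  by rewrite /gr_one eqxx => /eqP; rewrite eq_sym oner_eq0.
case: p hp => i1 j1 /= hp.
case: (leqP k 1) => [k1|k2]; first exact: (small_k hK i1 k1 ih rn0 sn0 hconv).
case: (leqP l 1) => [l1|l2]; first exact: (small_l hK j1 l1 ig rn0 sn0 hconv).
pose ok : 'I_k := Ordinal (ltnW k2).
pose ol : 'I_l := Ordinal (ltnW l2).
pose si := tperm ok i1.
pose ta := tperm ol j1.
have := @core0 K HU G k l (r \o si) (g \o si) (s \o ta) (h \o ta) ok ol k2 l2
  erefl erefl.
have gh0 : ((g \o si) ok * (h \o ta) ol = 1)%g by rewrite /= !tpermL.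
move=> /(_ gh0 (inj_comp ig (@perm_inj _ si)) (inj_comp ih (@perm_inj _ ta))).
move=> /(_ (fun i => rn0 (si i)) (fun j => sn0 (ta j))).
have hc' z : conv (r \o si) (g \o si) (s \o ta) (h \o ta) z = gr_one K z.
  by rewrite conv_perm.
move=> /(_ hc') hres z; by rewrite -(conv_perm s h r g ta si) hres.
Qed.


Lemma ind_at (K : unitRingType) (G : groupType) k (r : 'I_k -> K) (g : 'I_k -> G) i :
  injective g -> ind r g (g i) = r i.
Proof.
move=> ig; rewrite /ind (bigD1 i) //= eqxx big1 ?addr0 // => j ji.
by case: eqP => // /ig e; rewrite e eqxx in ji.
Qed.

Lemma exact_supp (K : unitRingType) (G : groupType) (f : G -> K) (L : seq G) :
  supported_in f L -> exists k (r : 'I_k -> K) (g : 'I_k -> G),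
    injective g /\ (forall i, r i != 0) /\ (forall i, g i \in L) /\ f =1 ind r g.
Proof.
move=> hs.
pose sf := [seq x <- undup L | f x != 0].
have usf : uniq sf by rewrite filter_uniq ?undup_uniq.
pose g (i : 'I_(size sf)) := nth 1%g sf i.
have gsf i : g i \in sf by rewrite mem_nth.
have ig : injective g.
  by move=> i j /eqP; rewrite nth_uniq // => /eqP e; apply: val_inj.
exists (size sf), (fun i => f (g i)), g; split; [|split; [|split]] => //.
- by move=> i; have := gsf i; rewrite mem_filter => /andP[].
- by move=> i; have := gsf i; rewrite mem_filter mem_undup => /andP[].
move=> x; case: (boolP (x \in sf)) => xs.
  have hi : (index x sf < size sf)%N by rewrite index_mem.
  have gi : g (Ordinal hi) = x by rewrite /g /= nth_index.
  by rewrite -[in RHS]gi ind_at // gi.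
rewrite /ind big1 => [|i _]; last by case: eqP => // e; rewrite -e gsf in xs.
apply/eqP; apply: contraR xs => fx; rewrite mem_filter fx mem_undup /=.
exact: hs.
Qed.

Lemma gr_mul_ext (K : unitRingType) (G : groupType) (L : seq G) (f f' g g' : G -> K) z :
  f =1 f' -> g =1 g' -> gr_mul L f g z = gr_mul L f' g' z.
Proof. by move=> ef eg; apply: eq_bigr => a _; rewrite ef eg. Qed.

Theorem corollary4p15 (K : unitRingType) (hK : is_divring K) :
  (forall G : groupType, group_ring_directly_finite K G) <->
  (forall Gamma : groupType, ULIE_group K Gamma ->
     group_ring_directly_finite K Gamma).
Proof.
split; first by move=> H G _; exact: H.
move=> HU G f1 f2 L1 L2 hs1 hs2 hmul.
have [k [r [g [ig [rn0 [gL ef1]]]]]] := exact_supp hs1.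
have [l [s [h [ih [sn0 [hL ef2]]]]]] := exact_supp hs2.
have hconv z : conv r g s h z = gr_one K z.
  rewrite -(@mul_ind K G k l r g s h L1) // -hmul; exact: gr_mul_ext.
have hres := core hK HU ig ih rn0 sn0 hconv.
move=> z; rewrite (gr_mul_ext L2 z ef2 ef1) mul_ind //; exact: hres.
Qed.
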